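(* Let $G$ be a $6$-regular graph, $\mathcal S$ a canonical path partition of $G$, and $P$ a path component of $\mathcal S$. Let $x_1,x_2\in V_2$ be path neighbors on $P$. If $x_1$ goes to a vertex $o$ that is an end-vertex of a path component $P'\neq P$, then $o$ is the only vertex that $x_2$ goes to.
   Context: All graphs are finite, simple and undirected. A path partition of $G=(V,E)$ is a set of vertex-disjoint paths (single vertices allowed) covering $V$; its members are components. A component with $t\ge3$ vertices is a cycle component if the subgraph induced on its vertex set has a spanning cycle; a one-vertex component is an isolated vertex; every other component is a path component. A path partition is canonical if (1) it has the minimum number of components among all path partitions of $G$; (2) among those, it has the maximum number of cycle components; (3) it has no isolated vertices. Given a canonical path partition $\mathcal S$ of $G$: two vertices are path neighbors if they are consecutive on a path component. An edge of $G$ is a free edge unless it joins two path neighbors or has both endpoints in the same cycle component. $V_1$ is the set of end-vertices of path components together with all vertices of cycle components. $V_2$ is the set of vertices not in $V_1$ that are joined by a free edge to a vertex of $V_1$. A balanced edge is a free edge with one endpoint in $V_1$ and the other in $V_2$; for $x\in V_2$, $y\in V_1$ we say $x$ goes to $y$ if $xy$ is a balanced edge. *)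

(* Defs.v *)
(* A simple graph G = (T, e): T a finType of vertices and
   e : rel T a symmetric irreflexive adjacency relation.
   A path partition is encoded as a list S of vertex sequences, each sequence
   listing the vertices of one component in path order. *)
From mathcomp Require Import all_boot.
Set Implicit Arguments. Unset Strict Implicit. Unset Printing Implicit Defensive.

Section PP.
Variables (T : finType) (e : rel T).

Definition is_gpath (c : seq T) : bool :=
  if c is x :: p then path e x p else true.

Definition is_path_partition (S : seq (seq T)) : Prop :=
  [/\ all (fun c => c != [::]) S,
      all is_gpath S,
      uniq (flatten S)
    & forall v : T, v \in flatten S].

(* a component with >= 3 vertices whose vertex set induces a subgraph with a
   spanning (Hamiltonian) cycle *)
Definition cycle_comp (c : seq T) : bool :=
  (2 < size c) && has (cycle e) (permutations c).

Definition isolated_comp (c : seq T) : bool := size c == 1.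

Definition path_comp (c : seq T) : bool :=
  (1 < size c) && ~~ cycle_comp c.

Definition canonical_pp (S : seq (seq T)) : Prop :=
  [/\ is_path_partition S,
      (forall S', is_path_partition S' -> size S <= size S'),
      (forall S', is_path_partition S' -> size S' = size S ->
          count cycle_comp S' <= count cycle_comp S)
    & ~~ has isolated_comp S].

Variable S : seq (seq T).

Definition consec (c : seq T) (u v : T) : bool :=
  ((u, v) \in zip c (behead c)) || ((v, u) \in zip c (behead c)).

Definition path_nbrs (u v : T) : bool :=
  has (fun c => path_comp c && consec c u v) S.

Definition same_cycle_comp (u v : T) : bool :=
  has (fun c => [&& cycle_comp c, u \in c & v \in c]) S.

Definition free_edge (u v : T) : bool :=
  [&& e u v, ~~ path_nbrs u v & ~~ same_cycle_comp u v].

Definition end_vertex (c : seq T) (x : T) : bool :=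
  (c != [::]) && ((head x c == x) || (last x c == x)).

Definition inV1 (x : T) : bool :=
  has (fun c => path_comp c && end_vertex c x) S
  || has (fun c => cycle_comp c && (x \in c)) S.

Definition inV2 (x : T) : bool :=
  ~~ inV1 x && [exists y, inV1 y && free_edge x y].

Definition balanced_edge (u v : T) : bool :=
  free_edge u v && ((inV1 u && inV2 v) || (inV2 u && inV1 v)).

Definition goes_to (x y : T) : bool :=
  [&& inV2 x, inV1 y & balanced_edge x y].

End PP.

(* Main.v *)
Require Import Defs.
From mathcomp Require Import all_boot zify.
Set Implicit Arguments. Unset Strict Implicit. Unset Printing Implicit Defensive.

Lemma gpath_sorted (T : finType) (e : rel T) s : is_gpath e s = sorted e s.
Proof. by case: s. Qed.

Lemma gpath_rev (T : finType) (e : rel T) (e_sym : symmetric e) s :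
  is_gpath e (rev s) = is_gpath e s.
Proof.
rewrite !gpath_sorted rev_sorted; case: s => //= x p.
by apply: eq_path => a b; rewrite e_sym.
Qed.

Lemma gpath_cat (T : finType) (e : rel T) z s1 s2 : s1 != [::] -> s2 != [::] ->
  is_gpath e (s1 ++ s2) = [&& is_gpath e s1, e (last z s1) (head z s2) & is_gpath e s2].
Proof.
case: s1 => [//|x p]; case: s2 => [//|y q] _ _.
by rewrite /is_gpath /= cat_path /= andbA.
Qed.

Lemma cat_nnil (T : eqType) (s1 s2 : seq T) : s2 != [::] -> s1 ++ s2 != [::].
Proof. by case: s1 => //; case: s2. Qed.

Lemma rcons_nnil (T : eqType) (s : seq T) x : rcons s x != [::].
Proof. by case: s. Qed.

Lemma head_cat_nnil (T : eqType) (z : T) s1 s2 : s1 != [::] -> head z (s1 ++ s2) = head z s1.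
Proof. by case: s1. Qed.

Lemma last_rev_head (T : Type) (x : T) s : last x (rev s) = head x s.
Proof. by case: s => //= a s; rewrite rev_cons last_rcons. Qed.

Lemma head_rcons (T : Type) (x y : T) s : head x (rcons s y) = head y s.
Proof. by case: s. Qed.

Lemma mem_rem_neq (T : eqType) (x y : T) s : x != y -> x \in s -> x \in rem y s.
Proof.
move=> nxy; elim: s => //= a s IH; rewrite in_cons; case/orP => [/eqP <-|xs].
  by rewrite (negbTE nxy) mem_head.
by case: (a == y) => //; rewrite in_cons IH ?orbT.
Qed.

Lemma zip_split (T : eqType) (s : seq T) u v :
  (u, v) \in zip s (behead s) -> exists l1 l2, s = l1 ++ u :: v :: l2.
Proof.
elim: s => [//|x s IH]; case: s IH => [//|y s] IH /=.
rewrite in_cons => /orP [/eqP [-> ->]|H]; first by exists [::], s.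
have [l1 [l2 E]] := IH H; exists (x :: l1), l2; by rewrite E.
Qed.

Lemma zip_cons_eq (T : eqType) (a : T) t : t != [::] ->
  zip (a :: t) t = (a, head a t) :: zip t (behead t).
Proof. by case: t. Qed.

Lemma consec_mid (T : finType) (s1 s2 : seq T) u v : consec (s1 ++ u :: v :: s2) u v.
Proof.
rewrite /consec; apply/orP; left.
elim: s1 => [|a s1 IH] /=; first by rewrite mem_head.
by rewrite zip_cons_eq ?cat_nnil // in_cons IH orbT.
Qed.

Lemma consec_sym (T : finType) (c : seq T) u v : consec c u v = consec c v u.
Proof. by rewrite /consec orbC. Qed.

Lemma end_rev (T : finType) (c : seq T) x : end_vertex (rev c) x = end_vertex c x.
Proof.
rewrite /end_vertex; case/lastP: c => [//|p y].
by rewrite rev_rcons /= last_rcons last_rev_head head_rcons rcons_nnil orbC.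
Qed.

Lemma ends_cons (T : finType) (o z : T) m : end_vertex (o :: m) z -> z = o \/ z = last o m.
Proof. by rewrite /end_vertex /= => /orP [] /eqP <-; [left|right]. Qed.

Lemma ends_split (T : finType) (l1 l2 : seq T) x1 x2 z :
  end_vertex (rcons l1 x1 ++ x2 :: l2) z -> z = head x1 (rcons l1 x1) \/ z = last x2 l2.
Proof.
rewrite /end_vertex => /andP [_] /orP [] /eqP <-.
  by left; case: l1.
by right; rewrite last_cat /=.
Qed.

Lemma orient_end (T : finType) (e : rel T) (e_sym : symmetric e) c o :
  end_vertex c o -> is_gpath e c -> exists m, [/\ perm_eq (o :: m) c, is_gpath e (o :: m)
     & forall z, end_vertex c z -> z = o \/ z = last o m].
Proof.
move=> H; have /andP [ne /orP [h|h]] := H.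
  case: c ne h H => [//|a q] _ /= /eqP -> H G.
  exists q; split => //; try exact: perm_refl.
  by move=> z; exact: ends_cons.
case/lastP: c ne h H => [//|q a] _; rewrite last_rcons => /eqP -> H G.
exists (rev q); split.
- by rewrite -rev_rcons perm_rev; exact: perm_refl.
- by rewrite -rev_rcons gpath_rev.
- by move=> z; rewrite -end_rev rev_rcons; exact: ends_cons.
Qed.

Lemma orient_cycle (T : finType) (e : rel T) c y :
  cycle_comp e c -> y \in c -> exists q, perm_eq (y :: q) c /\ is_gpath e (y :: q).
Proof.
case/andP => _ /hasP [p]; rewrite mem_permutations => pc cyc yc.
have yp : y \in p by rewrite (perm_mem pc).
case: (rot_to yp) => i q E; exists q; split.
  by rewrite -E perm_rot.
by move: cyc; rewrite -(rot_cycle i) E /= rcons_path => /andP [].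
Qed.

Lemma replace_pp (T : finType) (e : rel T) S old nw R :
  is_path_partition e S -> perm_eq S (old ++ R) -> all (fun c => c != [::]) nw ->
  all (is_gpath e) nw -> perm_eq (flatten nw) (flatten old) ->
  is_path_partition e (nw ++ R).
Proof.
case=> ne gp un cov pS nen gpn pf.
have pF : perm_eq (flatten S) (flatten nw ++ flatten R).
  apply: (perm_trans (perm_flatten pS)); rewrite flatten_cat perm_cat2r perm_sym; exact: pf.
split.
- rewrite all_cat nen /=; by rewrite (perm_all _ pS) all_cat in ne; case/andP: ne.
- rewrite all_cat gpn /=; by rewrite (perm_all _ pS) all_cat in gp; case/andP: gp.
- by rewrite flatten_cat -(perm_uniq pF).
- by move=> v; rewrite flatten_cat -(perm_mem pF).
Qed.
Ltac gen_lia := repeat match goal with |- context [count ?a ?s] => generalize (count a s) | |- context [nat_of_bool ?b] => generalize (nat_of_bool b) end; clear; intros; lia.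

Lemma key (T : finType) (e : rel T) (e_sym : symmetric e) (e_irr : irreflexive e)
  S (Scan : canonical_pp e S) P P' R (pS : perm_eq S (P :: P' :: R))
  (HPpath : path_comp e P) (HP'path : path_comp e P')
  (l1 l2 : seq T) x1 x2
  (HPv : perm_eq (rcons l1 x1 ++ x2 :: l2) P)
  (gPv : is_gpath e (rcons l1 x1 ++ x2 :: l2))
  (Hends : forall z, end_vertex P z -> z = head x1 (rcons l1 x1) \/ z = last x2 l2)
  (Hnbr : forall b, l2 = [:: b] -> consec P x2 b)
  o m (HO : perm_eq (o :: m) P') (gO : is_gpath e (o :: m))
  (Hends' : forall z, end_vertex P' z -> z = o \/ z = last o m)
  (ex1o : e x1 o) y (Hy : inV1 e S y) (Hfree : free_edge e S x2 y) (yo : y != o) : False.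
Proof.
case: Scan => PP Hmin Hcyc _.
have gpS := PP; case: gpS => _ gpS _ _.
have nrL2 : rev (x2 :: l2) != [::] by rewrite rev_cons rcons_nnil.
have lrL2 : forall z, last z (rev (x2 :: l2)) = x2 by move=> z; rewrite rev_cons last_rcons.
move: gPv; rewrite (gpath_cat _ x1) ?rcons_nnil // => /and3P [gL1 e12 gL2].
have grL2 : is_gpath e (rev (x2 :: l2)) by rewrite gpath_rev.
case/and3P: Hfree => ex2y nnb _.
have PS : P \in S by rewrite (perm_mem pS) mem_head.
have cP : forall a, count a P = count a (rcons l1 x1) + count a (x2 :: l2).
  by move=> a; rewrite -(permP HPv a) count_cat.
have cP' : forall a, count a P' = count a (o :: m) by move=> a; rewrite -(permP HO a).
have fl1 : forall A : seq T, flatten [:: A] = A by move=> A; rewrite /= cats0.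
have fl2 : forall A B : seq T, flatten [:: A; B] = A ++ B by move=> A B; rewrite /= cats0.
have fl3 : forall A B C : seq T, flatten [:: A; B; C] = A ++ B ++ C by move=> A B C; rewrite /= cats0.
have ne1 : forall A : seq T, A != [::] -> all (fun c => c != [::]) [:: A] by move=> A h; rewrite /= h.
have ne2 : forall A B : seq T, A != [::] -> B != [::] -> all (fun c => c != [::]) [:: A; B].
  by move=> A B h h'; rewrite /= h h'.
have gp1 : forall A : seq T, is_gpath e A -> all (is_gpath e) [:: A] by move=> A h; rewrite /= h.
have gp2 : forall A B : seq T, is_gpath e A -> is_gpath e B -> all (is_gpath e) [:: A; B].
  by move=> A B h h'; rewrite /= h h'.
have ncP : cycle_comp e P = false by case/andP: HPpath => _ /negbTE.
have ncP' : cycle_comp e P' = false by case/andP: HP'path => _ /negbTE.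
have dec : forall old R' nw, perm_eq S (old ++ R') -> all (fun c => c != [::]) nw ->
    all (is_gpath e) nw -> perm_eq (flatten nw) (flatten old) -> size nw < size old -> False.
  move=> old R' nw h1 h2 h3 h4 h5.
  have := Hmin _ (replace_pp PP h1 h2 h3 h4).
  by rewrite (perm_size h1) !size_cat leq_add2r leqNgt h5.
have gL1O : is_gpath e (rcons l1 x1 ++ o :: m).
  by rewrite (gpath_cat _ x1) ?rcons_nnil // gL1 gO last_rcons /= ex1o.
have fromR : forall c q R', perm_eq R (c :: R') -> perm_eq (y :: q) c ->
    is_gpath e (y :: q) -> False.
  move=> c q R' hR hc gC.
  have h1 : perm_eq S ([:: P; P'; c] ++ R') by apply: (perm_trans pS); rewrite /= !perm_cons.
  have h2 := ne2 _ _ (cat_nnil (rcons l1 x1) (isT : o :: m != [::]))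
                     (cat_nnil (rev (x2 :: l2)) (isT : y :: q != [::])).
  have h3 : all (is_gpath e) [:: rcons l1 x1 ++ o :: m; rev (x2 :: l2) ++ y :: q].
    apply: gp2 => //.
    by rewrite (gpath_cat _ x1) // grL2 lrL2 /= ex2y.
  have h4 : perm_eq (flatten [:: rcons l1 x1 ++ o :: m; rev (x2 :: l2) ++ y :: q])
                    (flatten [:: P; P'; c]).
    apply/permP => a; rewrite fl2 fl3 !count_cat count_rev cP cP' -(permP hc a).
    gen_lia.
  exact: (dec _ _ _ h1 h2 h3 h4 isT).
case/orP: Hy => /hasP [c cS /andP [pc yc]];
  rewrite (perm_mem pS) !in_cons in cS; case/or3P: cS => [/eqP Ec|/eqP Ec|cR].
- (* y end of P *)
  rewrite Ec in yc; case: (Hends y yc) => Ey.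
    have h2 := ne1 _ (cat_nnil (rev (x2 :: l2)) (cat_nnil (rcons l1 x1) (isT : o :: m != [::]))).
    have h3 : all (is_gpath e) [:: rev (x2 :: l2) ++ rcons l1 x1 ++ o :: m].
      apply: gp1.
      rewrite (gpath_cat _ x1) ?cat_nnil // grL2 lrL2 gL1O head_cat_nnil ?rcons_nnil //.
      by rewrite -Ey ex2y.
    have h4 : perm_eq (flatten [:: rev (x2 :: l2) ++ rcons l1 x1 ++ o :: m]) (flatten [:: P; P']).
      apply/permP => a; rewrite fl1 fl2 !count_cat count_rev cP cP'; gen_lia.
    exact: (dec [:: P; P'] R _ pS h2 h3 h4 isT).
  case El2 : l2 => [|b [|b' t]].
  + by move: ex2y; rewrite Ey El2 /= e_irr.
  + move/negP: nnb; apply; apply/hasP; exists P => //.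
    by rewrite HPpath Ey El2 /=; exact: (Hnbr b El2).
  + have cyc : cycle_comp e (x2 :: l2).
      apply/andP; split; first by rewrite El2.
      apply/hasP; exists (x2 :: l2); first by rewrite mem_permutations perm_refl.
      rewrite /= rcons_path; apply/andP; split; first exact: gL2.
      by rewrite -Ey e_sym ex2y.
    have h2 := ne2 _ _ (cat_nnil (rcons l1 x1) (isT : o :: m != [::])) (isT : x2 :: l2 != [::]).
    have h3 := gp2 _ _ gL1O gL2.
    have h4 : perm_eq (flatten [:: rcons l1 x1 ++ o :: m; x2 :: l2]) (flatten [:: P; P']).
      apply/permP => a; rewrite fl2 fl2 !count_cat cP cP'; gen_lia.
    have pp' := replace_pp PP (pS : perm_eq S ([:: P; P'] ++ R)) h2 h3 h4.
    have sz : size ([:: rcons l1 x1 ++ o :: m; x2 :: l2] ++ R) = size S by rewrite (perm_size pS).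
    have := Hcyc _ pp' sz.
    rewrite (permP pS) /= cyc ncP ncP' /=; gen_lia.
- (* y end of P' *)
  rewrite Ec in yc; case: (Hends' y yc) => Ey; first by rewrite Ey eqxx in yo.
  have h2 := ne1 _ (cat_nnil (rcons l1 x1) (isT : (o :: m) ++ x2 :: l2 != [::])).
  have h3 : all (is_gpath e) [:: rcons l1 x1 ++ (o :: m) ++ x2 :: l2].
    apply: gp1.
    rewrite (gpath_cat _ x1) ?rcons_nnil // gL1 last_rcons.
    rewrite (gpath_cat _ x1) // gO gL2 /= ex1o -Ey e_sym ex2y.
    by [].
  have h4 : perm_eq (flatten [:: rcons l1 x1 ++ (o :: m) ++ x2 :: l2]) (flatten [:: P; P']).
    apply/permP => a; rewrite fl1 fl2 !count_cat cP cP'; gen_lia.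
  exact: (dec [:: P; P'] R _ pS h2 h3 h4 isT).
- (* y end of path component in R *)
  have gc : is_gpath e c by apply: (allP gpS); rewrite (perm_mem pS) !in_cons cR !orbT.
  have [q [hc gC _]] := orient_end e_sym yc gc.
  exact: (fromR c q (rem c R) (perm_to_rem cR) hc gC).
- by move: HPpath; rewrite /path_comp -Ec pc andbF.
- by move: HP'path; rewrite /path_comp -Ec pc andbF.
- have [q [hc gC]] := orient_cycle pc yc.
  exact: (fromR c q (rem c R) (perm_to_rem cR) hc gC).
Qed.

Theorem mainTheorem9 (T : finType) (e : rel T)
  (e_sym : symmetric e) (e_irr : irreflexive e)
  (regular6 : forall v : T, #|[set u | e v u]| = 6)
  (S : seq (seq T)) (Scan : canonical_pp e S)
  (P : seq T) (HP : P \in S) (HPpath : path_comp e P)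
  (x1 x2 : T) (Hx1 : inV2 e S x1) (Hx2 : inV2 e S x2)
  (Hnb : consec P x1 x2)
  (o : T) (P' : seq T) (HP' : P' \in S) (HP'path : path_comp e P')
  (HneqP : P' != P) (Hoend : end_vertex P' o)
  (Hgo : goes_to e S x1 o) :
  goes_to e S x2 o /\ (forall y : T, goes_to e S x2 y -> y = o).
Proof.
have gpS : all (is_gpath e) S by case: Scan => [[]].
have HP'r : P' \in rem P S := mem_rem_neq HneqP HP'.
have pS : perm_eq S (P :: P' :: rem P' (rem P S)).
  by apply: (perm_trans (perm_to_rem HP)); rewrite perm_cons perm_to_rem.
have gP : is_gpath e P by exact: (allP gpS).
have gP' : is_gpath e P' by exact: (allP gpS).
have [m [HO gO Hends']] := orient_end e_sym Hoend gP'.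
case/and3P: Hgo => _ o1 /andP [fx1o _].
have ex1o : e x1 o by case/and3P: fx1o.
have Hkey : forall y, inV1 e S y -> free_edge e S x2 y -> y = o.
  move=> y Hy Hf; case: (eqVneq y o) => // yo; exfalso.
  case/orP: Hnb => /zip_split [l1 [l2 EP]].
  - apply: (@key T e e_sym e_irr S Scan P P' _ pS HPpath HP'path l1 l2 x1 x2
              _ _ _ _ o m HO gO Hends' ex1o y Hy Hf yo).
    + by rewrite cat_rcons -EP perm_refl.
    + by rewrite cat_rcons -EP.
    + by move=> z; rewrite EP -cat_rcons; exact: ends_split.
    + by move=> b Eb; rewrite EP Eb -cat_rcons; exact: consec_mid.
  - have EPv : rcons (rev l2) x1 ++ x2 :: rev l1 = rev P.
      by rewrite EP rev_cat !rev_cons !cat_rcons.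
    apply: (@key T e e_sym e_irr S Scan P P' _ pS HPpath HP'path (rev l2) (rev l1) x1 x2
              _ _ _ _ o m HO gO Hends' ex1o y Hy Hf yo).
    + by rewrite EPv perm_rev perm_refl.
    + by rewrite EPv gpath_rev.
    + by move=> z; rewrite -end_rev -EPv; exact: ends_split.
    + move=> b /(congr1 rev); rewrite revK /= => El1.
      by rewrite EP El1 consec_sym; exact: (consec_mid [::]).
case/andP: (Hx2) => _ /existsP [y /andP [y1 fy]].
have Ey := Hkey y y1 fy; rewrite Ey in fy.
split.
  by rewrite /goes_to /balanced_edge Hx2 o1 fy /= orbT.
by move=> y' /and3P [_ y'1 /andP [fy' _]]; exact: Hkey.
Qed.
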